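(* Let $g\ge1$, $n\ge3$, $k\in\{1,\dots,n\}$, and let $y\in A_g^n$ be a point at which $f_k$ attains its minimum on $A_g^n$. Let $i_0$ be the minimal index with $y_{i_0}=y_n$. Then (i) $i_0\le k$; (ii) $y_i>y_{i+1}$ for all $1\le i\le i_0-1$; (iii) $y_1\cdots y_i=g(y_{i+1}+\dots+y_n)$ for all $1\le i\le i_0-1$.
   Context: For $g,n\ge1$, $A_g^n\subseteq\mathbb{R}^n$ is the (compact) set of $(x_1,\dots,x_n)$ with $x_1\ge\dots\ge x_n\ge0$, $x_1+\dots+x_n=1/g$, and $x_1\cdots x_k\le g(x_{k+1}+\dots+x_n)$ for all $k=1,\dots,n-1$. For $1\le k\le n$, $f_k\colon A_g^n\to\mathbb{R}$, $f_k(x)=x_1\cdots x_k$. *)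

(* Defs.v *)
From HB Require Import structures.
From mathcomp Require Import all_boot all_order all_algebra.
From mathcomp Require Import reals.
Set Implicit Arguments. Unset Strict Implicit. Unset Printing Implicit Defensive.
Import Order.TTheory GRing.Theory Num.Theory.
Local Open Scope ring_scope.

(* Points of R^n are represented by sequences x : nat -> R, using only the
   coordinates x 1, ..., x n (1-based, as in the paper); other values are
   irrelevant. *)

Definition fk {R : realType} (k : nat) (x : nat -> R) : R :=
  \prod_(1 <= i < k.+1) x i.

Definition inA {R : realType} (g n : nat) (x : nat -> R) : Prop :=
  [/\ (forall i, (1 <= i < n)%N -> x i.+1 <= x i),
      0 <= x n,
      \sum_(1 <= i < n.+1) x i = (g%:R)^-1
    & forall k, (1 <= k < n)%N ->
        fk k x <= g%:R * \sum_(k.+1 <= i < n.+1) x i].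

(* Main.v *)
Require Import Defs.
From HB Require Import structures.
From mathcomp Require Import all_boot all_order all_algebra.
From mathcomp Require Import reals.
From mathcomp Require Import ring lra zify.
Import Order.TTheory GRing.Theory Num.Theory.
Local Open Scope ring_scope.

Set Implicit Arguments. Unset Strict Implicit.

Section H.
Variable R : realType.
Implicit Types x y : nat -> R.

Lemma mono n x : (forall i, (1 <= i < n)%N -> x i.+1 <= x i) ->
  forall a b, (1 <= a)%N -> (a <= b)%N -> (b <= n)%N -> x b <= x a.
Proof.
move=> H a b ha; elim: b => [|b IH] hab hbn; first lia.
case: (ltngtP a b.+1) => h; last by rewrite h.
- apply: le_trans (H b _) (IH _ _); lia.
- lia.
Qed.

Lemma nonneg n x : (forall i, (1 <= i < n)%N -> x i.+1 <= x i) -> 0 <= x n ->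
  forall m, (1 <= m <= n)%N -> 0 <= x m.
Proof.
move=> H h0 m /andP[h1 h2]; exact: le_trans h0 (mono H h1 h2 (leqnn n)).
Qed.

Lemma sum_split n j x : (j <= n)%N ->
  \sum_(1 <= m < n.+1) x m = \sum_(1 <= m < j.+1) x m + \sum_(j.+1 <= m < n.+1) x m.
Proof. move=> h; rewrite (big_cat_nat _ (n:=j.+1)) //. Qed.

Lemma fk_rec j x : fk j.+1 x = fk j x * x j.+1.
Proof. by rewrite /fk big_nat_recr. Qed.

Lemma S_rec n j x : (j < n)%N ->
  \sum_(j.+1 <= m < n.+1) x m = x j.+1 + \sum_(j.+2 <= m < n.+1) x m.
Proof. by move=> h; rewrite big_ltn. Qed.

Lemma chain n j (gR : R) x : (j < n)%N -> 0 <= gR -> 0 <= x j.+1 ->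
  fk j x <= gR * \sum_(j.+1 <= m < n.+1) x m ->
  x j.+1 * x j.+1 <= (\sum_(j.+2 <= m < n.+1) x m) * (1 - x j.+1) ->
  fk j.+1 x <= gR * \sum_(j.+2 <= m < n.+1) x m.
Proof.
move=> hj hg hx; rewrite fk_rec (S_rec _ hj).
move: (\sum_(j.+2 <= m < n.+1) x m) (fk j x) (x j.+1) hx => S P a hx h1 h2.
have e1 := ler_wpM2r hx h1.
apply: le_trans e1 _.
have h3 := ler_wpM2l hg h2.
have -> : gR * (a + S) * a = gR * (a * a) + gR * S * a by ring.
apply: (le_trans (lerD h3 (lexx _))).
suff -> : gR * (S * (1 - a)) + gR * S * a = gR * S by []. ring.
Qed.


Lemma prod1 lo hi p x y : (lo <= p < hi)%N -> (forall m, m != p -> x m = y m) ->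
  \prod_(lo <= m < hi) x m * y p = \prod_(lo <= m < hi) y m * x p.
Proof.
move=> hp H.
have hm : p \in index_iota lo hi by rewrite mem_index_iota.
have hu : uniq (index_iota lo hi) by rewrite /index_iota iota_uniq.
rewrite (bigD1_seq p hm hu) [X in _ = X * _](bigD1_seq p hm hu) /=.
rewrite (eq_bigr y) => [|m /H //]. ring.
Qed.

Lemma prod2 lo hi i e x y : (lo <= i < hi)%N -> (lo <= e < hi)%N -> i != e ->
  (forall m, m != i -> m != e -> x m = y m) ->
  \prod_(lo <= m < hi) x m * (y i * y e) = \prod_(lo <= m < hi) y m * (x i * x e).
Proof.
move=> hi' he hie H.
pose z m := if m == i then x m else y m.
have h1 := @prod1 lo hi e x z he.
have h2 := @prod1 lo hi i z y hi'.
have E1 : \prod_(lo <= m < hi) x m * y e = \prod_(lo <= m < hi) z m * x e.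
  have -> : y e = z e by rewrite /z eq_sym (negbTE hie).
  apply: h1 => m hm; rewrite /z; case: eqP => // /eqP hmi; exact: H.
have E2 : \prod_(lo <= m < hi) z m * y i = \prod_(lo <= m < hi) y m * x i.
  have -> : x i = z i by rewrite /z eqxx.
  apply: h2 => m hm; by rewrite /z (negbTE hm).
rewrite [LHS](_ : _ = (\prod_(lo <= m < hi) x m * y e) * y i); last ring.
rewrite E1 [LHS](_ : _ = (\prod_(lo <= m < hi) z m * y i) * x e); last ring.
rewrite E2; ring.
Qed.

Lemma prod_lt1 lo hi p (a b : nat -> R) : (lo <= p < hi)%N ->
  (forall m, (lo <= m < hi)%N -> 0 <= a m <= b m) ->
  (forall m, (lo <= m < hi)%N -> 0 < b m) -> a p < b p ->
  \prod_(lo <= m < hi) a m < \prod_(lo <= m < hi) b m.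
Proof.
move=> hp H1 H2 hab.
have hm : p \in index_iota lo hi by rewrite mem_index_iota.
have hu : uniq (index_iota lo hi) by rewrite /index_iota iota_uniq.
rewrite (bigD1_seq p hm hu) [X in _ < X](bigD1_seq p hm hu) /=.
rewrite big_seq_cond [X in _ < _ * X]big_seq_cond.
set A := \prod_(_ <- _ | _) _; set B := \prod_(_ <- _ | _) _.
have hA : A <= B.
  apply: ler_prod => m /andP[]; rewrite mem_index_iota => /H1 //.
have hB : 0 < B.
  apply: prodr_gt0 => m /andP[]; rewrite mem_index_iota => /H2 //.
have /andP[ha _] := H1 _ hp.
apply: (le_lt_trans (ler_wpM2l ha hA)).
by rewrite ltr_pM2r.
Qed.

Lemma sumD lo hi (y d : nat -> R) t :
  \sum_(lo <= m < hi) (y m + t * d m) = \sum_(lo <= m < hi) y m + t * \sum_(lo <= m < hi) d m.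
Proof. by rewrite big_split /= mulr_sumr. Qed.

Lemma tailD n j (y d : nat -> R) t : (j <= n)%N -> \sum_(1 <= m < n.+1) d m = 0 ->
  \sum_(j.+1 <= m < n.+1) (y m + t * d m) =
  \sum_(j.+1 <= m < n.+1) y m - t * \sum_(1 <= m < j.+1) d m.
Proof.
move=> hj h0.
have := sum_split (fun m => y m + t * d m) hj.
have := sum_split y hj. have := sum_split d hj.
rewrite !sumD h0. lra.
Qed.

Lemma sum_ind lo hi p : \sum_(lo <= m < hi) ((m == p)%:R : R) = ((lo <= p) && (p < hi))%N%:R.
Proof.
elim: hi => [|hi IH]; first by rewrite big_geq // ltn0 andbF.
case: (leqP lo hi) => h.
  rewrite big_nat_recr // IH.
  case: (eqVneq p hi) => [->|hne].
    by rewrite ltnn h ltnSn /= ?eqxx ?add0r.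
  have -> : (p < hi.+1)%N = (p < hi)%N by rewrite ltnS leq_eqVlt (negbTE hne).
  by rewrite /= addr0.
rewrite big_geq //; case: andP => // [[h3 h4]]; lia.
Qed.

Lemma sum_step lo c hi (u v : R) : (lo <= c <= hi)%N ->
  \sum_(lo <= m < hi) (if (m < c)%N then u else v) = u *+ (c - lo) + v *+ (hi - c).
Proof.
move=> /andP[h1 h2]; rewrite (big_cat_nat _ (n:=c)) //=.
rewrite (eq_big_nat _ _ (F2 := fun => u)); last by move=> m /andP[_ ->].
rewrite [X in _ + X](eq_big_nat _ _ (F2 := fun => v)); last first.
  by move=> m /andP[hm _]; rewrite ltnNge hm.
by rewrite !sumr_const_nat.
Qed.


Definition near0 (P : R -> Prop) := exists e : R, 0 < e /\ forall s, 0 <= s -> s <= e -> P s.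

Lemma near0_and P Q : near0 P -> near0 Q -> near0 (fun s => P s /\ Q s).
Proof.
move=> [e1 [h1 H1]] [e2 [h2 H2]]; exists (Num.min e1 e2); split.
  by rewrite lt_min h1 h2.
move=> s hs hse; split.
  by apply: H1 => //; apply: le_trans hse _; rewrite ge_min lexx.
by apply: H2 => //; apply: le_trans hse _; rewrite ge_min lexx orbT.
Qed.

Lemma near0_lin (K gap : R) : 0 <= K -> 0 < gap -> near0 (fun s => s * K <= gap).
Proof.
move=> hK hg; exists (gap / (K + 1)); split.
  by apply: divr_gt0 => //; lra.
move=> s hs hse.
have hK1 : 0 < K + 1 by lra.
have : s * (K + 1) <= gap by rewrite -ler_pdivlMr.
have : 0 <= s * 1 by lra.
nra.
Qed.

Lemma near0_ex P : near0 P -> exists e, 0 < e /\ P e.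
Proof. by move=> [e [h H]]; exists e; split => //; apply: H => //; apply: ltW. Qed.

Lemma sum_ge0_nat lo hi x : (forall m, (lo <= m < hi)%N -> 0 <= x m) ->
  0 <= \sum_(lo <= m < hi) x m.
Proof. by move=> H; rewrite big_nat_cond; apply: sumr_ge0 => m /andP[/H]. Qed.

Lemma tail_ge n j x : (j < n)%N -> (forall m, (j.+2 <= m <= n)%N -> 0 <= x m) ->
  x j.+1 <= \sum_(j.+1 <= m < n.+1) x m.
Proof.
move=> hj H; rewrite S_rec //.
have : 0 <= \sum_(j.+2 <= m < n.+1) x m by apply: sum_ge0_nat => m hm; apply: H; lia.
lra.
Qed.

Lemma halfL n x : (2 <= n)%N -> (forall i, (1 <= i < n)%N -> x i.+1 <= x i) -> 0 <= x n ->
  forall j, (2 <= j <= n)%N ->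
  2 * x j + \sum_(3 <= m < n.+1) x m <= \sum_(1 <= m < n.+1) x m.
Proof.
move=> hn H h0 j hj.
rewrite (S_rec (j:=0)) ?(S_rec (j:=1)); try lia.
have h1 := mono H (isT : (1 <= 1)%N) (_ : (1 <= j)%N) (_ : (j <= n)%N).
have h2 := mono H (isT : (1 <= 2)%N) (_ : (2 <= j)%N) (_ : (j <= n)%N).
have h3 := mono H (isT : (1 <= 1)%N) (isT : (1 <= 2)%N) hn.
have := h1 ltac:(lia) ltac:(lia); have := h2 ltac:(lia) ltac:(lia).
lra.
Qed.

Definition Cst (g n j : nat) x := fk j x <= g%:R * \sum_(j.+1 <= m < n.+1) x m.

Lemma chain_all (g n j0 hi : nat) x : (hi <= n)%N -> Cst g n j0 x ->
  (forall j, (j0 < j < hi)%N -> 0 <= x j /\ x j * x j <= (\sum_(j.+1 <= m < n.+1) x m) * (1 - x j)) ->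
  forall j, (j0 <= j < hi)%N -> Cst g n j x.
Proof.
move=> hhi h0 H; elim => [|j IH] /andP[h1 h2].
  have E : j0 = 0%N by lia.
  by rewrite -E.
case: (eqVneq j0 j.+1) => [<- //|hne].
have [hx hc] := H j.+1 ltac:(lia).
apply: chain => //; first by lia.
apply: IH; lia.
Qed.

End H.

Section H2.
Variable R : realType.
Implicit Types x y : nat -> R.

Lemma prod_gt0_nat lo hi x : (forall m, (lo <= m < hi)%N -> 0 < x m) ->
  0 < \prod_(lo <= m < hi) x m.
Proof. by move=> H; rewrite big_nat_cond; apply: prodr_gt0 => m /andP[/H]. Qed.

Lemma prod_ge0_nat lo hi x : (forall m, (lo <= m < hi)%N -> 0 <= x m) ->
  0 <= \prod_(lo <= m < hi) x m.
Proof. by move=> H; rewrite big_nat_cond; apply: prodr_ge0 => m /andP[/H]. Qed.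

Lemma pos g n y : (1 <= g)%N -> (1 <= n)%N -> inA g n y ->
  forall m, (1 <= m <= n)%N -> 0 < y m.
Proof.
move=> hg hn [hord hn0 hsum hcon].
suff: forall j, (j <= n)%N -> forall m, (1 <= m <= j)%N -> 0 < y m by apply.
elim=> [|j IH] hj m hm; first lia.
case: (ltngtP m j.+1) => [hlt | hgt | ->]; [apply: IH; lia | lia | ].
case: j IH hj hm => [|j] IH hj hm.
  rewrite ltNge; apply/negP => hy1.
  have : \sum_(1 <= m < n.+1) y m <= \sum_(1 <= m < n.+1) (0 : R).
    apply: ler_sum_nat => i hi; apply: (le_trans (mono hord (a:=1) (b:=i) _ _ _) hy1); lia.
  rewrite big1_eq hsum => h.
  have : 0 < (g%:R : R)^-1 by rewrite invr_gt0 ltr0n.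
  lra.
have hp : 0 < fk j.+1 y by apply: prod_gt0_nat => i hi; apply: IH; lia.
have hc := hcon j.+1 ltac:(lia).
rewrite ltNge; apply/negP => hy.
have : \sum_(j.+2 <= m < n.+1) y m <= \sum_(j.+2 <= m < n.+1) y j.+2.
  apply: ler_sum_nat => i hi; apply: (mono hord (a:=j.+2) (b:=i)); lia.
rewrite sumr_const_nat => h.
have := mulrn_wle0 (n.+1 - j.+2) hy.
have : 0 <= (g%:R : R) by rewrite ler0n.
move: hc; set S := \sum_(_ <= _ < _) _ => hc h1 h2.
have : (g%:R : R) * S <= 0.
  apply: mulr_ge0_le0 => //.
  exact: le_trans h h2.
lra.
Qed.


Lemma ginv_le1 (g : nat) : (1 <= g)%N -> 0 < (g%:R : R)^-1 /\ (g%:R : R)^-1 <= 1.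
Proof.
move=> hg; have hg0 : 0 < (g%:R : R) by rewrite ltr0n.
by rewrite invr_gt0 hg0 invf_le1 // ler1n.
Qed.

Lemma yhalf g n y : (1 <= g)%N -> (3 <= n)%N -> inA g n y ->
  forall j, (2 <= j <= n)%N -> 2 * y j < 1.
Proof.
move=> hg hn hy; have hp := pos (n:=n) hg ltac:(lia) hy.
case: hy => hord hn0 hsum hcon j hj.
have h1 := @halfL R n y ltac:(lia) hord hn0 j hj.
have h2 : y 3 <= \sum_(3 <= m < n.+1) y m.
  apply: (tail_ge (j:=2)); first lia.
  move=> m hm; apply: ltW; apply: hp; lia.
have h3 : 0 < y 3 by apply: hp; lia.
have [h4 h5] := ginv_le1 hg.
rewrite hsum in h1.
lra.
Qed.

Lemma TS g n y j : (1 <= g)%N -> (3 <= n)%N -> inA g n y -> (1 <= j < n)%N ->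
  fk j y = g%:R * \sum_(j.+1 <= m < n.+1) y m -> y j.+1 < y j.
Proof.
move=> hg hn hy hj ht.
have hp := pos (n:=n) hg ltac:(lia) hy.
have hh := yhalf hg hn hy.
case: hy => hord hn0 hsum hcon.
rewrite lt_neqAle hord // andbT; apply/negP => /eqP E.
have hg1 : 1 <= (g%:R : R) by rewrite ler1n.
have hnn : forall m, (1 <= m <= n)%N -> 0 <= y m by move=> m hm; apply: ltW; apply: hp.
have hS : y j.+1 <= \sum_(j.+1 <= m < n.+1) y m.
  apply: tail_ge; first lia. move=> m hm; apply: hnn; lia.
case: j hj ht E hS => [|j] hj; first lia.
case: j hj => [|j] hj.
  rewrite /fk big_nat1 => ht E hS.
  rewrite S_rec // in ht.
  have h3 : y 3 <= \sum_(3 <= m < n.+1) y m.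
    apply: (tail_ge (j:=2)); first lia. move=> m hm; apply: hnn; lia.
  have := hp 3%N ltac:(lia).
  move: ht h3; set S := \sum_(3 <= m < n.+1) y m => ht h3 h4.
  have : 0 <= y 2 + S by have := hp 2%N ltac:(lia); lra.
  nra.
move=> ht E hS.
have hc := hcon j.+1 ltac:(lia).
rewrite fk_rec in ht; rewrite S_rec in hc; last lia.
move: hc ht hS; rewrite E; move: (fk j.+1 y) (\sum_(j.+3 <= m < n.+1) y m) => P S hc ht hS.
have ha : 0 < y j.+2 by apply: hp; lia.
have hha : 2 * y j.+2 < 1 by apply: hh; lia.
have h1 : P * y j.+2 <= g%:R * (y j.+2 + S) * y j.+2 by apply: ler_wpM2r => //; apply: ltW.
have h2 : y j.+2 * y j.+2 < S * (1 - y j.+2) by nra.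
have h3 : g%:R * (y j.+2 * y j.+2) < g%:R * (S * (1 - y j.+2)) by rewrite ltr_pM2l // ltr0n.
lra.
Qed.

End H2.

Section H3.
Variable R : realType.
Implicit Types x y : nat -> R.
Ltac nlia := repeat match goal with H : context [R] |- _ => clear H end; lia.

Lemma P1 g n k p y : (1 <= g)%N -> (3 <= n)%N -> inA g n y ->
  (1 <= k <= p)%N -> (p < n)%N -> (forall m, (p < m <= n)%N -> y m = y n) ->
  y n < y p -> exists x, inA g n x /\ fk k x < fk k y.
Proof.
move=> hg hn hy hk hpn htail hgap.
have hp := pos (n:=n) hg ltac:(nlia) hy.
have hh := yhalf hg hn hy.
have hy' := hy; case: hy' => hord hn0 hsum hcon.
set c := y n in hgap htail hn0 *.
have hc0 : 0 < c by apply: hp; nlia.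
have hc2 : 2 * c < 1 by apply: hh; nlia.
set M := (n - p)%N.
have hM : 0 < (M%:R : R) by rewrite ltr0n; nlia.
set q : R := p%:R / M%:R.
have hq : 0 <= q by apply: divr_ge0; rewrite ler0n.
pose d m : R := if (m < p.+1)%N then -1 else q.
have hsd : \sum_(1 <= m < n.+1) d m = 0.
  rewrite (sum_step (lo:=1) (c:=p.+1) (hi:=n.+1)); last nlia.
  have -> : (n.+1 - p.+1)%N = M by nlia.
  have -> : q *+ M = p%:R.
    by rewrite -[q *+ M]mulr_natr /q divfK //; apply: lt0r_neq0.
  by rewrite subn1 /= mulNrn addNr.
have [e [he [he1 he2]]] : exists e, 0 < e /\ e * (1 + q) <= y p - c /\ e * q <= (1 - 2 * c) / 2.
  have k1 : 0 <= 1 + q by lra.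
  have g1 : 0 < y p - c by lra.

  have g2 : 0 < (1 - 2 * c) / 2 by lra.
  have [e [he [h1 h2]]] := near0_ex (near0_and (near0_lin k1 g1) (near0_lin hq g2)).
  by exists e.
have heq : 0 <= e * q by apply: mulr_ge0 => //; apply: ltW.
pose x m := y m + e * d m.
have hd1 : forall m, (m <= p)%N -> d m = -1 by move=> m hm; rewrite /d ltnS hm.
have hd2 : forall m, (p < m)%N -> d m = q by move=> m hm; rewrite /d ltnS leqNgt hm.
have xle : forall m, (1 <= m <= p)%N -> 0 <= x m <= y m.
  move=> m hm; rewrite /x /= (hd1 m); last nlia.
  have := mono hord (a:=m) (b:=p) ltac:(nlia) ltac:(nlia) ltac:(nlia).
  move=> hmp; apply/andP; split; lra.
have xt : forall m, (p < m <= n)%N -> x m = c + e * q.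
  by move=> m hm; rewrite /x hd2 ?htail //; nlia.
have Cpre : forall j, (1 <= j <= p)%N -> Cst g n j x.
  move=> j hj; rewrite /Cst.
  have h1 : fk j x <= fk j y.
    rewrite /fk big_nat_cond [X in _ <= X]big_nat_cond; apply: ler_prod => m /andP[hm _].
    apply: xle; nlia.
  have h2 : \sum_(j.+1 <= m < n.+1) y m <= \sum_(j.+1 <= m < n.+1) x m.
    rewrite /x /= (tailD _ _ _ hsd); last nlia.
    have hs : 0 <= \sum_(1 <= m < j.+1) - d m.
      by apply: sum_ge0_nat => m hm; rewrite (hd1 m); [lra | nlia].
    rewrite sumrN in hs.
    have : e * \sum_(1 <= m < j.+1) d m <= 0 by apply: mulr_ge0_le0; [apply: ltW | lra].
    lra.
  have h3 := hcon j ltac:(nlia).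
  have h4 : g%:R * \sum_(j.+1 <= m < n.+1) y m <= g%:R * \sum_(j.+1 <= m < n.+1) x m.
    by apply: ler_wpM2l => //; rewrite ler0n.
  lra.
exists x; split; last first.
  apply: (prod_lt1 (p:=k)); first nlia.
  - move=> m hm; apply: xle; nlia.
  - move=> m hm; apply: hp; nlia.
  - rewrite /x /= (hd1 k); last nlia. lra.
split.
- move=> j hj; case: (leqP j.+1 p) => h.
    rewrite /x /= (hd1 j.+1); last nlia. rewrite (hd1 j); last nlia. have := hord j hj. lra.
  case: (eqVneq j p) => [E | hne].
    rewrite E (xt p.+1); last nlia. rewrite /x /= (hd1 p) //. lra.
  rewrite (xt j.+1); last nlia. rewrite (xt j); [lra | nlia].
- rewrite (xt n); last nlia. lra.
- by rewrite /x sumD hsd mulr0 addr0.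
- move=> j hj; case: (leqP j p) => hjp.
    apply: Cpre; nlia.
  apply: (chain_all (j0:=p) (hi:=n)) => //; last nlia.
    apply: Cpre; nlia.
  move=> j0 hj0.
  have hS : x j0.+1 <= \sum_(j0.+1 <= m < n.+1) x m.
    apply: tail_ge; first nlia.
    by move=> m hm; rewrite xt; [lra | nlia].
  rewrite xt in hS; last nlia.
  rewrite xt; last nlia.
  move: hS; set S := \sum_(_ <= _ < _) _ => hS.
  have ha : 0 <= c + e * q by lra.
  have ha2 : c + e * q <= 1 - (c + e * q) by lra.
  split; first lra.
  apply: le_trans (ler_wpM2l ha ha2) _.
  apply: ler_wpM2r; lra.
Qed.


Lemma cmp_le (A B P Q : R) : 0 < P -> 0 <= B -> A * P = B * Q -> Q <= P -> A <= B.
Proof.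
move=> hP hB E hQ; rewrite -(ler_pM2r hP) E; exact: ler_wpM2l.
Qed.

Lemma cmp_lt (A B P Q : R) : 0 < P -> 0 < B -> A * P = B * Q -> Q < P -> A < B.
Proof.
move=> hP hB E hQ; rewrite -(ltr_pM2r hP) E; by rewrite ltr_pM2l.
Qed.

Lemma P2 g n k i e y : (1 <= g)%N -> (3 <= n)%N -> inA g n y ->
  (1 <= i)%N -> (i < e)%N -> (e <= k <= n)%N -> (e < n)%N ->
  fk i y < g%:R * \sum_(i.+1 <= m < n.+1) y m ->
  ((1 < i)%N -> y i < y i.-1) ->
  (forall m, (i < m <= e)%N -> y m = y i.+1) ->
  y e.+1 < y e -> exists x, inA g n x /\ fk k x < fk k y.
Proof.
move=> hg hn hy hi hie hek hen hslack hleft hblock hend.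
have hp := pos (n:=n) hg ltac:(nlia) hy.
have hh := yhalf hg hn hy.
have hy' := hy; case: hy' => hord hn0 hsum hcon.
set w := y i.+1.
have hw0 : 0 < w by apply: hp; nlia.
have hw2 : 2 * w < 1 by apply: hh; nlia.
have hyew : y e = w by apply: hblock; nlia.
have hwi : w <= y i by apply: hord; nlia.
have hg0 : 0 < (g%:R : R) by rewrite ltr0n.
pose d m : R := (m == i)%:R - (m == e)%:R.
have hsd : \sum_(1 <= m < n.+1) d m = 0.
  rewrite sumrB !sum_ind.
  have -> : ((1 <= i) && (i < n.+1))%N = true by apply/andP; split; nlia.
  have -> : ((1 <= e) && (e < n.+1))%N = true by apply/andP; split; nlia.
  by rewrite subrr.
set gapL : R := if (1 < i)%N then y i.-1 - y i else 1.
have hgapL : 0 < gapL by rewrite /gapL; case: ifP => h; [have := hleft h; lra | lra].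
set Pm : R := fk i.-1 y.
have hPm : 0 <= Pm by apply: prod_ge0_nat => m hm; apply: ltW; apply: hp; nlia.
have hPi : fk i y = Pm * y i by rewrite /Pm; case: (i) hi => // i' _; rewrite fk_rec.
have [eps [he [[[he1 he2] he3] he4]]] : exists eps, 0 < eps /\
   (((eps * 1 <= gapL /\ eps * 1 <= y e - y e.+1) /\
   eps * (Pm + g%:R) <= g%:R * \sum_(i.+1 <= m < n.+1) y m - fk i y) /\
   eps * (1 - w) <= w * (1 - 2 * w)).
  have k1 : (0 : R) <= 1 by lra.
  have k2 : 0 <= Pm + g%:R by lra.
  have k3 : 0 <= 1 - w by lra.
  have g2 : 0 < y e - y e.+1 by lra.
  have g3 : 0 < g%:R * \sum_(i.+1 <= m < n.+1) y m - fk i y by lra.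
  have g4 : 0 < w * (1 - 2 * w) by apply: mulr_gt0; lra.
  exact: near0_ex (near0_and (near0_and (near0_and (near0_lin k1 hgapL) (near0_lin k1 g2))
     (near0_lin k2 g3)) (near0_lin k3 g4)).
pose x m := y m + eps * d m.
have hxo : forall m, m != i -> m != e -> x m = y m.
  by move=> m h1 h2; rewrite /x /d (negbTE h1) (negbTE h2) subrr mulr0 addr0.
have hxi : x i = y i + eps.
  by rewrite /x /d eqxx (negbTE (_ : i != e)) ?subr0 ?mulr1 //; apply/eqP; nlia.
have hxe : x e = w - eps.
  rewrite /x /d eqxx (negbTE (_ : e != i)) ?sub0r ?mulrN1 ?hyew //; apply/eqP; nlia.
have hord_x : forall j, (1 <= j < n)%N -> x j.+1 <= x j.
  move=> j hj.
  case: (eqVneq j.+1 i) => [E | h1].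
    have h1i : (1 < i)%N by nlia.
    rewrite E hxi hxo; [ | apply/eqP; nlia | apply/eqP; nlia].
    move: he1; rewrite /gapL h1i -E /= => he1; lra.
  case: (eqVneq j e) => [E | h2].
    rewrite E hxe hxo; [ | apply/eqP; nlia | apply/eqP; nlia]. lra.
  have dj1 : d j.+1 <= 0 by rewrite /d (negbTE h1) sub0r oppr_le0 ler0n.
  have dj : 0 <= d j by rewrite /d (negbTE h2) subr0 ler0n.
  have := hord j hj.
  have : eps * d j.+1 <= 0 by apply: mulr_ge0_le0 => //; apply: ltW.
  have : 0 <= eps * d j by apply: mulr_ge0 => //; apply: ltW.
  rewrite /x; lra.
have hxn : 0 <= x n by rewrite hxo; [ apply: ltW; apply: hp; nlia | apply/eqP; nlia | apply/eqP; nlia].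
have hxnn := nonneg hord_x hxn.
have hsdp : forall j, (j <= n)%N -> \sum_(1 <= m < j.+1) d m =
   ((1 <= i) && (i < j.+1))%N%:R - ((1 <= e) && (e < j.+1))%N%:R.
  by move=> j hj; rewrite sumrB !sum_ind.
have Clow : forall j, (1 <= j < i)%N -> Cst g n j x.
  move=> j hj; rewrite /Cst.
  have -> : fk j x = fk j y by apply: eq_big_nat => m hm; apply: hxo; apply/eqP; nlia.
  rewrite /x (tailD _ _ _ hsd); last nlia.
  rewrite hsdp; last nlia.
  have -> : ((1 <= i) && (i < j.+1))%N = false by apply/negP => /andP[]; nlia.
  have -> : ((1 <= e) && (e < j.+1))%N = false by apply/negP => /andP[]; nlia.
  rewrite subrr mulr0 subr0; apply: hcon; nlia.
have Cmid : Cst g n i x.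
  rewrite /Cst.
  have hPx : fk i x = Pm * x i.
    have -> : Pm = fk i.-1 x by apply: eq_big_nat => m hm; apply: esym; apply: hxo; apply/eqP; nlia.
    by rewrite -[in LHS](prednK hi) fk_rec prednK.
  rewrite hPx hxi /x (tailD _ _ _ hsd); last nlia.
  rewrite hsdp; last nlia.
  have -> : ((1 <= i) && (i < i.+1))%N = true by apply/andP; split; nlia.
  have -> : ((1 <= e) && (e < i.+1))%N = false by apply/negP => /andP[]; nlia.
  move: he3; rewrite hPi /= subr0; lra.
have Chigh : forall j, (e <= j <= n)%N -> fk j x <= fk j y /\
    \sum_(j.+1 <= m < n.+1) x m = \sum_(j.+1 <= m < n.+1) y m.
  move=> j hj; split.
    apply: (cmp_le (P := y i * y e) (Q := x i * x e)).
    - apply: mulr_gt0; apply: hp; nlia.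
    - apply: prod_ge0_nat => m hm; apply: ltW; apply: hp; nlia.
    - apply: prod2; [nlia | nlia | apply/eqP; nlia | exact: hxo].
    - rewrite hxi hxe hyew; nra.
  rewrite /x (tailD _ _ _ hsd); last nlia.
  rewrite hsdp; last nlia.
  have -> : ((1 <= i) && (i < j.+1))%N = true by apply/andP; split; nlia.
  have -> : ((1 <= e) && (e < j.+1))%N = true by apply/andP; split; nlia.
  by rewrite subrr mulr0 subr0.
exists x; split; last first.
  apply: (cmp_lt (P := y i * y e) (Q := x i * x e)).
  - apply: mulr_gt0; apply: hp; nlia.
  - apply: prod_gt0_nat => m hm; apply: hp; nlia.
  - apply: prod2; [nlia | nlia | apply/eqP; nlia | exact: hxo].
  - rewrite hxi hxe hyew; nra.
split => //.
  by rewrite /x sumD hsd mulr0 addr0.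
move=> j hj; case: (ltnP j i) => h1.
  apply: Clow; nlia.
case: (ltnP j e) => h2.
  apply: (chain_all (j0:=i) (hi:=e)) => //; try nlia.
  move=> j0 hj0.
  have hS : x j0.+1 <= \sum_(j0.+1 <= m < n.+1) x m.
    apply: tail_ge; first nlia.
    move=> m hm; apply: hxnn; nlia.
  have hxj : x j0 = w by rewrite hxo; [apply: hblock; nlia | apply/eqP; nlia | apply/eqP; nlia].
  have hxj1 : w - eps <= x j0.+1.
    case: (eqVneq j0.+1 e) => [->|hne]; first by rewrite hxe.
    have E : x j0.+1 = y j0.+1 by apply: hxo => //; apply/eqP; nlia.
    rewrite E hblock -/w; [lra | nlia].
  rewrite hxj; move: hS; set S := \sum_(_ <= _ < _) _ => hS.
  split; first lra.
  have h3 : 0 <= 1 - w by lra.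
  have h4 : (w - eps) * (1 - w) <= S * (1 - w) by apply: ler_wpM2r => //; lra.
  nra.
have [h3 h4] := Chigh j ltac:(nlia).
rewrite /Cst h4; apply: le_trans h3 _; apply: hcon; nlia.
Qed.

Lemma absK (t K gap : R) : 0 <= K -> `|t| * K <= gap -> t * K <= gap /\ - t * K <= gap.
Proof.
move=> hK h; split.
  by apply: le_trans h; apply: ler_wpM2r => //; apply: ler_norm.
by apply: le_trans h; apply: ler_wpM2r => //; rewrite -normrN; apply: ler_norm.
Qed.

Lemma P3 g n k i y : (1 <= g)%N -> (3 <= n)%N -> inA g n y ->
  (1 <= i)%N -> (i < k <= n)%N ->
  fk i y < g%:R * \sum_(i.+1 <= m < n.+1) y m ->
  ((1 < i)%N -> y i < y i.-1) ->
  (forall m, (i < m <= n)%N -> y m = y n) ->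
  y n < y i -> (forall x, inA g n x -> fk k y <= fk k x) -> False.
Proof.
move=> hg hn hy hi hik hslack hleft htail hgap hmin.
have hp := pos (n:=n) hg ltac:(nlia) hy.
have hh := yhalf hg hn hy.
have hy' := hy; case: hy' => hord hn0 hsum hcon.
set c := y n in hgap htail hn0 *.
have hc0 : 0 < c by apply: hp; nlia.
have hc2 : 2 * c < 1 by apply: hh; nlia.
have hg0 : 0 < (g%:R : R) by rewrite ltr0n.
set M := (n - i)%N.
have hM : 0 < (M%:R : R) by rewrite ltr0n; nlia.
set Mr : R := M%:R.
pose d m : R := (m == i)%:R * Mr + (if (m < i.+1)%N then 0 else -1).
have hd_lo : forall m, (m < i)%N -> d m = 0.
  move=> m hm; rewrite /d (_ : (m == i) = false); last by apply/negP => /eqP; nlia.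
  by rewrite (_ : (m < i.+1)%N = true) ?mul0r ?addr0 //; nlia.
have hd_i : d i = Mr by rewrite /d eqxx mul1r ltnSn addr0.
have hd_hi : forall m, (i < m)%N -> d m = -1.
  move=> m hm; rewrite /d (_ : (m == i) = false); last by apply/negP => /eqP; nlia.
  by rewrite (_ : (m < i.+1)%N = false) ?mul0r ?add0r //; apply/negP; nlia.
have hsd : \sum_(1 <= m < n.+1) d m = 0.
  rewrite big_split /= -mulr_suml sum_ind.
  rewrite (sum_step (lo:=1) (c:=i.+1) (hi:=n.+1)); last nlia.
  have -> : ((1 <= i) && (i < n.+1))%N = true by apply/andP; split; nlia.
  rewrite mul1r mul0rn add0r (_ : (n.+1 - i.+1)%N = M); last nlia.
  by rewrite mulNrn subrr.
have hsd_lo : forall j, (j < i)%N -> \sum_(1 <= m < j.+1) d m = 0.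
  move=> j hj; rewrite (eq_big_nat _ _ (F2 := fun=> 0)) ?big1_eq // => m hm; apply: hd_lo; nlia.
have hsd_i : \sum_(1 <= m < i.+1) d m = Mr.
  rewrite big_nat_recr //= hd_i (eq_big_nat _ _ (F2 := fun=> 0)) ?big1_eq ?add0r // => m hm; apply: hd_lo; nlia.
set gapL : R := if (1 < i)%N then y i.-1 - y i else 1.
have hgapL : 0 < gapL by rewrite /gapL; case: ifP => h; [have := hleft h; lra | lra].
set Pm : R := fk i.-1 y.
have hPm : 0 <= Pm by apply: prod_ge0_nat => m hm; apply: ltW; apply: hp; nlia.
have hPi : fk i y = Pm * y i by rewrite /Pm; case: (i) hi => // i' _; rewrite fk_rec.
set S := \sum_(i.+1 <= m < n.+1) y m in hslack *.
have [eps [he H]] : exists eps, 0 < eps /\ forall s, 0 <= s -> s <= eps ->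
   ((((s * Mr <= gapL /\ s * (Mr + 1) <= y i - c) /\ s * 1 <= c) /\
     s * (Mr * (Pm + g%:R)) <= g%:R * S - fk i y) /\ s * 1 <= (1 - 2 * c) / 2).
  have k0 : 0 <= Mr by apply: ltW.
  have k1 : 0 <= Mr + 1 by lra.
  have k2 : (0 : R) <= 1 by lra.
  have k3 : 0 <= Mr * (Pm + g%:R) by apply: mulr_ge0; lra.
  have g2 : 0 < y i - c by lra.
  have g3 : 0 < g%:R * S - fk i y by lra.
  have g5 : 0 < (1 - 2 * c) / 2 by lra.
  exact: (near0_and (near0_and (near0_and (near0_and (near0_lin k0 hgapL) (near0_lin k1 g2))
     (near0_lin k2 hc0)) (near0_lin k3 g3)) (near0_lin k2 g5)).
have xin : forall t, `|t| <= eps -> inA g n (fun m => y m + t * d m).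
  move=> t ht; have [[[[c1 c2] c3] c4] c5] := H _ (normr_ge0 t) ht.
  have [c1a c1b] := absK (ltW hM) c1.
  have k1 : 0 <= Mr + 1 by lra.
  have k2 : (0 : R) <= 1 by lra.
  have k3 : 0 <= Mr * (Pm + g%:R) by apply: mulr_ge0; lra.
  have [c2a c2b] := absK k1 c2.
  have [c3a c3b] := absK k2 c3.
  have [c4a c4b] := absK k3 c4.
  have [c5a c5b] := absK k2 c5.
  set x := (fun m => y m + t * d m).
  have hxlo : forall m, (m < i)%N -> x m = y m by move=> m hm; rewrite /x /= hd_lo // mulr0 addr0.
  have hxi : x i = y i + t * Mr by rewrite /x /= hd_i.
  have hxhi : forall m, (i < m <= n)%N -> x m = c - t.
    move=> m hm; rewrite /x /= hd_hi; last nlia. rewrite htail; last nlia. lra.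
  have hord_x : forall j, (1 <= j < n)%N -> x j.+1 <= x j.
    move=> j hj; case: (ltngtP j.+1 i) => h1.
    - rewrite !hxlo; [ | nlia | nlia]. exact: hord.
    - case: (eqVneq j i) => [E | hne].
        rewrite E hxi hxhi; last nlia. lra.
      rewrite !hxhi; [lra | nlia | nlia].
    - have h1i : (1 < i)%N by nlia.
      move: c1a; rewrite /gapL h1i => c1a.
      rewrite h1 hxi hxlo; last nlia.
      have E : i.-1 = j by nlia.
      rewrite E in c1a; lra.
  have hxn : 0 <= x n by rewrite hxhi; [lra | nlia].
  have hxnn := nonneg hord_x hxn.
  split => //.
    by rewrite /x sumD hsd mulr0 addr0.
  have Clow : forall j, (1 <= j < i)%N -> Cst g n j x.
    move=> j hj; rewrite /Cst.
    have -> : fk j x = fk j y by apply: eq_big_nat => m hm; apply: hxlo; nlia.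
    rewrite /x (tailD _ _ _ hsd); last nlia.
    rewrite hsd_lo; last nlia.
    rewrite mulr0 subr0; apply: hcon; nlia.
  have Cmid : Cst g n i x.
    rewrite /Cst.
    have hPx : fk i x = Pm * x i.
      have -> : Pm = fk i.-1 x by apply: eq_big_nat => m hm; apply: esym; apply: hxlo; nlia.
      by rewrite -[in LHS](prednK hi) fk_rec prednK.
    rewrite hPx hxi /x (tailD _ _ _ hsd); last nlia.
    rewrite hsd_i -/S.
    move: c4a; rewrite hPi. lra.
  move=> j hj; case: (ltngtP j i) => h1.
  - apply: Clow; nlia.
  - apply: (chain_all (j0:=i) (hi:=n)) => //; try nlia.
    move=> j0 hj0.
    have hS : x j0.+1 <= \sum_(j0.+1 <= m < n.+1) x m.
      apply: tail_ge; first nlia.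
      move=> m hm; apply: hxnn; nlia.
    rewrite hxhi in hS; last nlia.
    rewrite hxhi; last nlia.
    move: hS; set S' := \sum_(_ <= _ < _) _ => hS.
    have ha : 0 <= c - t by lra.
    have ha2 : c - t <= 1 - (c - t) by lra.
    split; first lra.
    apply: le_trans (ler_wpM2l ha ha2) _.
    apply: ler_wpM2r; lra.
  - by rewrite h1.
have n1 : `|eps| <= eps by rewrite ger0_norm // ltW.
have n2 : `|- eps| <= eps by rewrite normrN ger0_norm // ltW.
have hx1 := xin _ n1; have hx2 := xin _ n2.
have m1 := hmin _ hx1; have m2 := hmin _ hx2.
have hfy : 0 <= fk k y by apply: prod_ge0_nat => m hm; apply: ltW; apply: hp; nlia.
have L := ler_pM hfy hfy m1 m2.
have G : fk k (fun m => y m + eps * d m) * fk k (fun m => y m + - eps * d m) < fk k y * fk k y.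
  rewrite /fk -!big_split /=.
  case: hx1 => o1 z1 _ _; case: hx2 => o2 z2 _ _.
  have nn1 := nonneg o1 z1; have nn2 := nonneg o2 z2.
  apply: (prod_lt1 (p:=i)); first nlia.
  - move=> m hm.
    have := nn1 m ltac:(nlia); have := nn2 m ltac:(nlia) => a2 a1.
    apply/andP; split; first by apply: mulr_ge0.
    have -> : (y m + eps * d m) * (y m + - eps * d m) = y m * y m - (eps * d m) ^+ 2 by ring.
    have := sqr_ge0 (eps * d m); lra.
  - move=> m hm; apply: mulr_gt0; apply: hp; nlia.
  - have -> : (y i + eps * d i) * (y i + - eps * d i) = y i * y i - (eps * d i) ^+ 2 by ring.
    rewrite hd_i.
    have : 0 < (eps * Mr) ^+ 2 by apply: exprn_gt0; apply: mulr_gt0.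
    lra.
lra.
Qed.

End H3.
Unset Implicit Arguments. Set Strict Implicit.

Ltac nliaR T := repeat match goal with H : context [T] |- _ => clear H end; lia.

Theorem lemma3p9 (R : realType) (g n k : nat) (y : nat -> R) (i0 : nat) :
  (1 <= g)%N -> (3 <= n)%N -> (1 <= k <= n)%N ->
  inA g n y ->
  (forall x : nat -> R, inA g n x -> fk k y <= fk k x) ->
  (1 <= i0 <= n)%N -> y i0 = y n ->
  (forall j, (1 <= j < i0)%N -> y j != y n) ->
  [/\ (i0 <= k)%N,
      (forall i, (1 <= i < i0)%N -> y i.+1 < y i)
    & (forall i, (1 <= i < i0)%N ->
         fk i y = g%:R * \sum_(i.+1 <= j < n.+1) y j)].
Proof.
move=> hg hn hk hy hmin hi0 hyi0 hneq.
have hp := pos (n:=n) hg ltac:(nliaR R) hy.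
have hy' := hy; case: hy' => hord hn0 hsum hcon.
have hgt : forall j, (1 <= j < i0)%N -> y n < y j.
  move=> j hj; rewrite lt_neqAle eq_sym hneq //.
  apply: (mono hord); nliaR R.
have htail : forall m, (i0 <= m <= n)%N -> y m = y n.
  move=> m hm; apply/eqP; rewrite eq_le; apply/andP; split.
    rewrite -hyi0; apply: (mono hord); nliaR R.
  apply: (mono hord); nliaR R.
have hik : (i0 <= k)%N.
  rewrite leqNgt; apply/negP => hki.
  have ht' : forall m, (i0.-1 < m <= n)%N -> y m = y n by move=> m hm; apply: htail; nliaR R.
  have hg' : y n < y i0.-1 by apply: hgt; nliaR R.
  have a1 : (1 <= k <= i0.-1)%N by nliaR R.
  have a2 : (i0.-1 < n)%N by nliaR R.
  have [x [hx hlt]] := P1 hg hn hy a1 a2 ht' hg'.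
  have := hmin x hx; lra.
have h3 : forall i, (1 <= i < i0)%N -> fk i y = g%:R * \sum_(i.+1 <= j < n.+1) y j.
  pose P i := ((1 <= i < i0)%N && (fk i y != g%:R * \sum_(i.+1 <= j < n.+1) y j)).
  suff : ~ exists i, P i.
    move=> hP i hi; apply/eqP; apply/negP => /negP hne; apply: hP; exists i.
    by rewrite /P hi hne.
  move=> hex; case: (ex_minnP hex) => i /andP[hi hne] hmin'.
  have hslack : fk i y < g%:R * \sum_(i.+1 <= j < n.+1) y j.
    by rewrite lt_neqAle hne hcon //; nliaR R.
  have tight : forall j, (1 <= j < i)%N -> fk j y = g%:R * \sum_(j.+1 <= m < n.+1) y m.
    move=> j hj; apply/eqP; apply/negP => /negP hnej.
    have := hmin' j; rewrite /P hnej andbT.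
    have -> : (1 <= j < i0)%N by nliaR R.
    move=> /(_ isT); nliaR R.
  have hleft : (1 < i)%N -> y i < y i.-1.
    move=> h1; have hj : (1 <= i.-1 < n)%N by nliaR R.
    have ht : fk i.-1 y = g%:R * \sum_(i.-1.+1 <= m < n.+1) y m by apply: tight; nliaR R.
    have := TS hg hn hy hj ht.
    by rewrite prednK //; nliaR R.
  case: (ltngtP i.+1 i0) => hii0.
  - pose Q e := ((i < e)%N && (y e.+1 < y e)).
    have hQ : exists e, Q e.
      exists i0.-1; rewrite /Q prednK; last nliaR R.
      rewrite hyi0; apply/andP; split; first nliaR R.
      apply: hgt; nliaR R.
    case: (ex_minnP hQ) => e /andP[hie hend] hmine.
    have hei0 : (e < i0)%N.
      have := hmine i0.-1; rewrite /Q prednK; last nliaR R.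
      rewrite hyi0 (hgt i0.-1); last nliaR R.
      have -> : (i < i0.-1)%N by nliaR R.
      move=> /(_ isT); nliaR R.
    have hblock : forall m, (i < m <= e)%N -> y m = y i.+1.
      suff : forall t, (i.+1 + t <= e)%N -> y (i.+1 + t)%N = y i.+1.
        move=> H m hm; have E : m = (i.+1 + (m - i.+1))%N by nliaR R.
        rewrite {1}E; apply: H; nliaR R.
      elim=> [|t IH] ht.
        by f_equal; nliaR R.
      rewrite -IH; last nliaR R.
      have E : (i.+1 + t.+1)%N = (i.+1 + t).+1 by nliaR R.
      apply/eqP; rewrite eq_le; apply/andP; split.
        rewrite E; apply: hord; nliaR R.
      rewrite leNgt; apply/negP => hlt.
      have := hmine (i.+1 + t)%N; rewrite /Q -E hlt andbT.
      have -> : (i < i.+1 + t)%N by nliaR R.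
      move=> /(_ isT); nliaR R.
    have a1 : (e <= k <= n)%N by nliaR R.
    have a2 : (e < n)%N by nliaR R.
    have a3 : (1 <= i)%N by nliaR R.
    have [x [hx hlt]] := P2 hg hn hy a3 hie a1 a2 hslack hleft hblock hend.
    have := hmin x hx; lra.
  - nliaR R.
  - have a1 : (1 <= i)%N by nliaR R.
    have a2 : (i < k <= n)%N by nliaR R.
    have a3 : forall m, (i < m <= n)%N -> y m = y n by move=> m hm; apply: htail; nliaR R.
    have a4 : y n < y i by apply: hgt; nliaR R.
    exact: (P3 hg hn hy a1 a2 hslack hleft a3 a4 hmin).
split => // i hi.
apply: (TS hg hn hy); first nliaR R.
exact: h3.
Qed.
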